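(* In the polytope-code decoding setting described in the context, for every vertex $v_i \in V^*$ we have $\bar y_i = y_i$.
   Context: Let $T\ge 1$, $N > T$, $N_0\ge1$ be integers. An eligible $(N,N-T)$-generator matrix is an $N\times(N-T)$ matrix $A=(A_{ij})$ with nonnegative integer entries whose first $N-T$ rows form the identity matrix and such that every $(N-T)\times(N-T)$ submatrix obtained by choosing $N-T$ rows is nonsingular. Given $x_1,\dots,x_{N-T}\in\mathbb{Z}^{N_0}$, the transmitted codewords are $y_i = \sum_{j=1}^{N-T} A_{ij} x_j \in \mathbb{Z}^{N_0}$, $i\in[N]$. The decoder receives $\bar y_1,\dots,\bar y_N\in\mathbb{Z}^{N_0}$, where $\bar y_i = y_i$ for all $i$ outside some unknown set of at most $T$ indices, and it knows exactly the values $F_{ij} = \langle y_i,y_j\rangle$ for all $i,j\in[N]$. The syndrome graph $G$ has vertices $v_1,\dots,v_N$; for $i\ne j$ there is an edge between $v_i$ and $v_j$ iff $\langle \bar y_i,\bar y_j\rangle = F_{ij}$, and there is a self-loop at $v_i$ iff $\langle \bar y_i,\bar y_i\rangle = F_{ii}$. Let $\hat G$ be obtained from $G$ by deleting every vertex without a self-loop (and its incident edges). Let $V'$ be the set of vertices of $\hat G$ that belong to some clique (set of pairwise adjacent distinct vertices) of size at least $N-T$ in $\hat G$. Let $V^*$ be the set of $v_i\in V'$ such that $v_i$ is adjacent in $\hat G$ to every $v_j \in V'$ (adjacency of $v_i$ to itself being given by its self-loop). *)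

(* Defs.v *)
From HB Require Import structures.
From mathcomp Require Import all_boot all_order all_algebra.
Set Implicit Arguments. Unset Strict Implicit. Unset Printing Implicit Defensive.
Import Order.TTheory GRing.Theory Num.Theory.
Local Open Scope ring_scope.

Definition dotv (n : nat) (u v : 'rV[int]_n) : int :=
  \sum_(k < n) u ord0 k * v ord0 k.

Definition eligible_gen (N T : nat) (A : 'M[int]_(N, N - T)) : Prop :=
  [/\ (forall i j, 0 <= A i j),
      (forall (i : 'I_N) (j : 'I_(N - T)), (i < N - T)%N ->
          A i j = (nat_of_ord i == nat_of_ord j)%:R)
    & (forall f : 'I_(N - T) -> 'I_N, injective f -> \det (rowsub f A) != 0)].

Definition codeword (N T N0 : nat) (A : 'M[int]_(N, N - T))
    (x : 'I_(N - T) -> 'rV[int]_N0) (i : 'I_N) : 'rV[int]_N0 :=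
  \sum_(j < N - T) A i j *: x j.

(* Syndrome graph: for i <> j edge iff <yb_i,yb_j> = F_ij = <y_i,y_j>;
   for i = j this is exactly the self-loop condition. *)
Definition syn_adj (N N0 : nat) (y yb : 'I_N -> 'rV[int]_N0) (i j : 'I_N) : bool :=
  dotv (yb i) (yb j) == dotv (y i) (y j).

Definition hatV (N N0 : nat) (y yb : 'I_N -> 'rV[int]_N0) : {set 'I_N} :=
  [set i | syn_adj y yb i i].

Definition is_clique (N N0 : nat) (y yb : 'I_N -> 'rV[int]_N0) (C : {set 'I_N}) : bool :=
  (C \subset hatV y yb) &&
  [forall u in C, forall w in C, (u != w) ==> syn_adj y yb u w].

Definition Vprime (N N0 K : nat) (y yb : 'I_N -> 'rV[int]_N0) : {set 'I_N} :=
  [set v | [exists C : {set 'I_N}, [&& v \in C, (K <= #|C|)%N & is_clique y yb C]]].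

Definition Vstar (N N0 K : nat) (y yb : 'I_N -> 'rV[int]_N0) : {set 'I_N} :=
  [set v in Vprime K y yb | [forall w in Vprime K y yb, syn_adj y yb v w]].

(* Main.v *)
Require Import Defs.
From HB Require Import structures.
From mathcomp Require Import all_boot all_order all_algebra.
From mathcomp Require Import zify.
Import Order.TTheory GRing.Theory Num.Theory.
Local Open Scope ring_scope.

Lemma dotvC n (u v : 'rV[int]_n) : dotv u v = dotv v u.
Proof. by rewrite /dotv; apply: eq_bigr => k _; rewrite mulrC. Qed.

Lemma dotvDl n (u v w : 'rV[int]_n) : dotv (u + v) w = dotv u w + dotv v w.
Proof.
by rewrite /dotv -big_split; apply: eq_bigr => k _; rewrite mxE mulrDl.
Qed.

Lemma dotvNl n (u w : 'rV[int]_n) : dotv (- u) w = - dotv u w.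
Proof.
by rewrite /dotv -sumrN; apply: eq_bigr => k _; rewrite mxE mulNr.
Qed.

Lemma dotv_sum n m (u : 'rV[int]_n) (a : 'I_m -> int) (v : 'I_m -> 'rV[int]_n) :
  dotv u (\sum_(j < m) a j *: v j) = \sum_(j < m) a j * dotv u (v j).
Proof.
rewrite /dotv.
under eq_bigr => k _ do rewrite summxE big_distrr /=.
rewrite exchange_big /=; apply: eq_bigr => j _.
rewrite big_distrr /=; apply: eq_bigr => k _.
by rewrite mxE mulrCA.
Qed.

Lemma dotv_self0 n (d : 'rV[int]_n) : dotv d d = 0 -> d = 0.
Proof.
move=> H; apply/rowP => k; rewrite mxE.
have /eqP := H; rewrite /dotv psumr_eq0; last by move=> i _; rewrite -expr2 sqr_ge0.
move/allP/(_ k (mem_index_enum k)) => /=.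
by rewrite mulf_eq0 orbb => /eqP.
Qed.

Lemma dot_expand n (u v : 'rV[int]_n) : dotv u v = 0 ->
  dotv (v + u) (v + u) = dotv v v + dotv u u.
Proof.
move=> H; rewrite dotvDl (dotvC _ v) (dotvC _ u) !dotvDl H (dotvC _ v u) H.
by rewrite addr0 add0r.
Qed.

Theorem mainTheorem5 (T N N0 : nat) (hT : (1 <= T)%N) (hN : (T < N)%N)
    (hN0 : (1 <= N0)%N)
    (A : 'M[int]_(N, N - T)) (hA : eligible_gen A)
    (x : 'I_(N - T) -> 'rV[int]_N0) (yb : 'I_N -> 'rV[int]_N0)
    (herr : exists S : {set 'I_N}, (#|S| <= T)%N /\
              (forall i, i \notin S -> yb i = codeword A x i)) :
  forall i, i \in Vstar (N - T) (codeword A x) yb -> yb i = codeword A x i.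
Proof.
move=> i; rewrite inE => /andP [iV /forallP adj].
have self : syn_adj (codeword A x) yb i i by have := adj i; rewrite iV.
case: herr => S [cS good].
have [iS|iS] := boolP (i \in S); last exact: good.
set y := codeword A x.
have cG : (N - T <= #|~: S|)%N.
  have := cardsC S; rewrite card_ord => E.
  move: E cS; move: #|S| #|~: S| => a b E cS; rewrite -E; clear -cS; lia.
have GV : forall w, w \in ~: S -> w \in Vprime (N - T) y yb.
  move=> w wG; rewrite inE; apply/existsP; exists (~: S).
  rewrite wG cG /= /is_clique; apply/andP; split.
    apply/subsetP => u uG; rewrite inE /syn_adj.
    by rewrite inE in uG; rewrite good.
  apply/forallP => u; apply/implyP => uG; apply/forallP => v; apply/implyP => vG.
  apply/implyP => _; rewrite /syn_adj.
  rewrite inE in uG; rewrite inE in vG; rewrite (good u uG) (good v vG); exact: eqxx.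
set d := yb i - y i.
have dG : forall w, w \in ~: S -> dotv d (y w) = 0.
  move=> w wG; have := adj w; rewrite GV // /= /syn_adj.
  rewrite inE in wG; rewrite (good w wG) => /eqP E.
  by rewrite /d dotvDl dotvNl E subrr.
pose f (k : 'I_(N - T)) : 'I_N := enum_val (A := mem (~: S)) (widen_ord cG k).
have finj : injective f.
  move=> k1 k2 /enum_val_inj /(congr1 val) /= E; exact: val_inj.
have fG : forall k, f k \in ~: S by move=> k; exact: (enum_valP (A := mem (~: S))).
case: hA => _ _ /(_ f finj) detnz.
pose c := \col_(j < N - T) dotv d (x j).
have Bc : rowsub f A *m c = 0.
  apply/colP => k; rewrite [RHS]mxE mxE.
  transitivity (dotv d (y (f k))); last exact: dG.
  rewrite /y /codeword dotv_sum.
  by apply: eq_bigr => j _; rewrite !mxE.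
have c0 : c = 0.
  have := congr1 (mulmx (\adj (rowsub f A))) Bc.
  rewrite mulmxA mul_adj_mx mulmx0 mul_scalar_mx => E.
  apply/colP => j; move/matrixP/(_ j ord0): E; rewrite !mxE => /eqP.
  by rewrite mulf_eq0 (negbTE detnz) /= => /eqP.
have dyi : dotv d (y i) = 0.
  rewrite /y /codeword dotv_sum big1 // => j _.
  by move/matrixP/(_ j ord0): c0; rewrite !mxE => ->; rewrite mulr0.
have ybi : yb i = y i + d by rewrite /d addrC subrK.
have dyi' : dotv (y i) d = 0 by rewrite dotvC.
move: self; rewrite /syn_adj -/y ybi (@dot_expand _ _ _ dyi).
move=> /eqP E; have dd : dotv d d = 0 by apply: (@addrI _ (dotv (y i) (y i))); rewrite addr0.
by rewrite (@dotv_self0 _ d dd) addr0.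
Qed.
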